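(* Let $L$ be a finite extension of $\mathbb{Z}_\mathrm{max}$. Then $\mathrm{ui}(L/\mathbb{Z}_\mathrm{max})<\infty$.
   Context: A semifield is a commutative semiring (both operations commutative monoids, distributive law) in which every nonzero element is a unit. $\mathbb{Z}_\mathrm{max}=\mathbb{Z}\cup\{-\infty\}$ is the semifield with addition $\max$ and multiplication ordinary addition. An extension of a semifield $K$ is a semifield $L$ with an injective homomorphism $K\to L$; it is finite if $L$ is thereby a finitely generated $K$-semimodule. The unit index is $\mathrm{ui}(L/K)=|L^\times/K^\times|$, where $L^\times$ is the group of units of $L$ and $K^\times$ is identified with its image. *)

(* Defs.v *)
From HB Require Import structures.
From mathcomp Require Import all_boot all_order all_algebra.
From mathcomp Require Import classical_sets cardinality.
Set Implicit Arguments. Unset Strict Implicit. Unset Printing Implicit Defensive.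
Import Order.TTheory GRing.Theory Num.Theory.
Local Open Scope ring_scope.
Local Open Scope classical_set_scope.

(* Z_max = Z ∪ {-oo}: None represents -oo, Some n represents n : int.
   Semiring addition is max, semiring multiplication is integer addition. *)
Definition Zmax := option int.

Definition zmax_add (x y : Zmax) : Zmax :=
  match x, y with
  | None, _ => y
  | _, None => x
  | Some a, Some b => Some (Num.max a b)
  end.

Definition zmax_mul (x y : Zmax) : Zmax :=
  match x, y with
  | Some a, Some b => Some (a + b)
  | _, _ => None
  end.

Definition zmax_zero : Zmax := None.
Definition zmax_one : Zmax := Some 0.

Lemma zmax_addA : associative zmax_add.
Proof. by case=> [a|] [b|] [c|] //=; rewrite maxA. Qed.
Lemma zmax_addC : commutative zmax_add.
Proof. by case=> [a|] [b|] //=; rewrite maxC. Qed.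
Lemma zmax_add0 : left_id zmax_zero zmax_add.
Proof. by case. Qed.

HB.instance Definition _ := Choice.on Zmax.
HB.instance Definition _ := GRing.isNmodule.Build Zmax zmax_addA zmax_addC zmax_add0.

Lemma zmax_mulA : associative zmax_mul.
Proof. by case=> [a|] [b|] [c|] //=; rewrite addrA. Qed.
Lemma zmax_mulC : commutative zmax_mul.
Proof. by case=> [a|] [b|] //=; rewrite addrC. Qed.
Lemma zmax_mul1 : left_id zmax_one zmax_mul.
Proof. by case=> [a|] //=; rewrite add0r. Qed.
Lemma zmax_mulDl : left_distributive zmax_mul zmax_add.
Proof. by case=> [a|] [b|] [c|] //=; rewrite addr_maxl. Qed.
Lemma zmax_mul0 : left_zero zmax_zero zmax_mul.
Proof. by []. Qed.
Lemma zmax_one_neq0 : zmax_one != zmax_zero.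
Proof. by []. Qed.

HB.instance Definition _ := GRing.Nmodule_isComNzSemiRing.Build Zmax
  zmax_mulA zmax_mulC zmax_mul1 zmax_mulDl zmax_mul0 zmax_one_neq0.

Definition sunit (R : comPzSemiRingType) (x : R) : Prop := exists y : R, x * y = 1.

Definition semifield (R : comPzSemiRingType) : Prop :=
  forall x : R, x != 0 -> sunit x.

(* L is finitely generated as a K-semimodule via f : K -> L (k . x := f k * x). *)
Definition finite_ext (K L : comPzSemiRingType) (f : K -> L) : Prop :=
  exists s : seq L, forall x : L,
    exists c : 'I_(size s) -> K, x = \sum_(i < size s) f (c i) * s`_i.

(* L^x / K^x : the set of cosets  u * f(K^x)  for u in L^x. *)
Definition unit_cosets (K L : comPzSemiRingType) (f : K -> L) : set (set L) :=
  [set C | exists u : L, sunit u /\ C = [set u * f k | k in [set k : K | sunit k]]].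

Definition finite_unit_index (K L : comPzSemiRingType) (f : K -> L) : Prop :=
  finite_set (unit_cosets f).

(* Main.v *)
Require Import Defs.
From HB Require Import structures.
From mathcomp Require Import all_boot all_order all_algebra.
From mathcomp Require Import classical_sets cardinality.
From mathcomp Require Import zify.
Set Implicit Arguments. Unset Strict Implicit. Unset Printing Implicit Defensive.
Import Order.TTheory GRing.Theory Num.Theory.
Local Open Scope ring_scope.
Local Open Scope classical_set_scope.

Definition lee (L : comPzSemiRingType) (x y : L) := x + y = y.

Lemma leeT (L : comPzSemiRingType) (x y z : L) : lee x y -> lee y z -> lee x z.
Proof. by rewrite /lee => h1 h2; rewrite -h2 addrA h1. Qed.

Lemma lee_mul (L : comPzSemiRingType) (x y z : L) : lee x y -> lee (x * z) (y * z).
Proof. by rewrite /lee => h; rewrite -mulrDl h. Qed.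

Lemma lee_mull (L : comPzSemiRingType) (x y z : L) : lee x y -> lee (z * x) (z * y).
Proof. by rewrite ![z * _]mulrC; apply: lee_mul. Qed.

Lemma lee0 (L : comPzSemiRingType) (x : L) : lee 0 x.
Proof. by rewrite /lee add0r. Qed.

Lemma lee_sumr (L : comPzSemiRingType) (I : Type) (r : seq I) (P : pred I)
  (F : I -> L) (X : L) :
  (forall i, P i -> lee (F i) X) -> lee (\sum_(i <- r | P i) F i) X.
Proof.
move=> h; elim/big_rec: _ => [|i y Pi hy]; first exact: lee0.
by rewrite /lee -addrA hy; apply: h.
Qed.

Lemma lee_term (L : comPzSemiRingType) (n : nat) (F : 'I_n -> L) i :
  (forall x : L, x + x = x) -> lee (F i) (\sum_j F j).
Proof. by move=> idem; rewrite /lee (bigD1 i) //= addrA idem. Qed.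

Lemma lee_sum2 (L : comPzSemiRingType) (n : nat) (F G : 'I_n -> L) :
  (forall i, lee (F i) (G i)) -> lee (\sum_i F i) (\sum_i G i).
Proof. by move=> h; rewrite /lee -big_split /=; apply: eq_bigr => i _; apply: h. Qed.

Lemma sum_eq_drop (L : comPzSemiRingType) (n : nat) (a b : 'I_n -> L) :
  (forall x : L, x + x = x) ->
  (forall i, b i = a i \/ b i = 0) -> (forall i, lee (a i) (\sum_j b j)) ->
  \sum_i a i = \sum_i b i.
Proof.
move=> idem hb ha.
have h1 : lee (\sum_i b i) (\sum_i a i).
  apply: lee_sum2 => i; case: (hb i) => ->; [exact: idem | exact: lee0].
have h2 : lee (\sum_i a i) (\sum_i b i) by apply: lee_sumr => i _; apply: ha.
by rewrite -h2 addrC h1.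
Qed.

Lemma seq_ub (l : seq int) : exists N : int, forall x, x \in l -> x <= N.
Proof.
elim: l => [|a l [N HN]]; first by exists 0.
exists (Num.max a N) => x; rewrite inE => /orP[/eqP->|/HN h].
  by rewrite le_max lexx.
by rewrite le_max h orbT.
Qed.

Lemma seq_max (T : eqType) (e : T -> int) (l : seq T) x0 :
  x0 \in l -> exists2 x, x \in l & forall y, y \in l -> e y <= e x.
Proof.
elim: l x0 => [|a l IH] x0 //= _.
case: l IH => [|b l] IH.
  by exists a; rewrite ?mem_head // => y; rewrite inE => /eqP->.
have [x hx hmax] := IH b (mem_head _ _).
case: (leP (e a) (e x)) => h.
  exists x; first by rewrite inE hx orbT.
  by move=> y; rewrite inE => /orP[/eqP->|/hmax].
exists a; first exact: mem_head.
move=> y; rewrite inE => /orP[/eqP->//|/hmax hy].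
by apply: le_trans hy (ltW h).
Qed.

Lemma zmax11 : (1 + 1 : Zmax) = 1.
Proof. by []. Qed.

Theorem mainTheorem3 (L : comPzSemiRingType) (f : {rmorphism Zmax -> L}) :
  semifield L -> injective f -> finite_ext f -> finite_unit_index f.
Proof.
move=> hsf finj [s hs].
set n := size s in hs *.
have f1 : f 1 = 1 := rmorph1 f.
have f0 : f 0 = 0 := rmorph0 f.
have fD x y : f (x + y) = f x + f y := rmorphD f x y.
have fM x y : f (x * y) = f x * f y := rmorphM f x y.
have idem (x : L) : x + x = x.
  have -> : x + x = (1 + 1) * x by rewrite mulrDl mul1r.
  by rewrite -f1 -fD zmax11 f1 mul1r.
have one_neq0 : (1 : L) != 0.
  apply/eqP => h; have : f 1 = f 0 by rewrite f1 f0.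
  by move/finj.
pose Fs k := f (Some k).
have fSD a b : Fs a * Fs b = Fs (a + b) by rewrite /Fs -fM.
have fS0 : Fs 0 = 1 by [].
have fmono a b : a <= b -> lee (Fs a) (Fs b).
  move=> hab; rewrite /lee /Fs -fD.
  have -> : ((Some a : Zmax) + (Some b : Zmax)) = Some (Num.max a b) by [].
  by rewrite (max_idPr hab).
pose w := \sum_(i < n) s`_i.
have hB x : exists N, lee x (Fs N * w).
  have [c ->] := hs x.
  pose e i := odflt 0 (c i).
  have [N HN] := seq_ub [seq e i | i <- enum 'I_n].
  exists N; rewrite /w mulr_sumr; apply: lee_sum2 => i; apply: lee_mul.
  have := HN (e i) (map_f _ (mem_enum _ i)).
  rewrite /e; case: (c i) => [k /= hk|_]; last by rewrite f0; apply: lee0.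
  exact: fmono.
have wn0 : w != 0.
  apply/eqP => w0; have [N] := hB 1; rewrite /lee w0 mulr0 addr0 => h.
  by rewrite h eqxx in one_neq0.
have unit_nz (x : L) : sunit x -> x != 0.
  by case=> y hy; apply/eqP => x0; rewrite x0 mul0r in hy; rewrite hy eqxx in one_neq0.
have hK (j : 'I_n) : exists K : int, s`_j != 0 -> lee w (Fs K * s`_j).
  case: (eqVneq s`_j 0) => [->|sj0]; first by exists 0.
  have [y hy] := hsf _ sj0.
  have [z hz] := hsf _ wn0.
  have [N HN] := hB (w * w * y).
  exists N => _.
  have := lee_mul (z * s`_j) HN.
  have -> : w * w * y * (z * s`_j) = w * (w * z) * (s`_j * y).
    by rewrite -!mulrA; congr (_ * _); rewrite [y * _]mulrC -!mulrA; congr (_ * _); rewrite mulrC -mulrA.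
  have -> : Fs N * w * (z * s`_j) = Fs N * (w * z) * s`_j.
    by rewrite -!mulrA.
  by rewrite hz hy !mulr1.
have [Kf HKf] := fin_all_exists hK.
have [N0 HN0] := seq_ub [seq Kf j | j <- enum 'I_n].
pose KK := `|N0|%N.
have hKK (j : 'I_n) : s`_j != 0 -> lee w (Fs KK%:Z * s`_j).
  move=> sj0; apply: leeT (HKf j sj0) _; apply: lee_mul; apply: fmono.
  apply: le_trans (HN0 _ (map_f _ (mem_enum _ j))) _.
  by rewrite /KK abszE ler_norm.
pose g (o : option 'I_KK.+1) : L :=
  if o is Some m then Fs (- (m : nat)%:Z) else 0.
pose F (d : {ffun 'I_n -> option 'I_KK.+1}) : set L :=
  [set (\sum_(i < n) g (d i) * s`_i) * f k | k in [set k : Zmax | sunit k]].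
have claim (u : L) : u != 0 -> exists (d : {ffun 'I_n -> option 'I_KK.+1}) (N : int), u = Fs N * \sum_(i < n) g (d i) * s`_i.
  move=> un0.
  have fN : f None = 0 := f0.
  have [c hc] := hs u.
  pose e i := odflt 0 (c i).
  pose P (i : 'I_n) := (c i != None) && (s`_i != 0).
  have [i0 Pi0] : exists i, P i.
    case: (boolP [exists i, P i]) => [/existsP//|/existsPn hn].
    move: un0; rewrite hc big1 ?eqxx // => i _.
    move: (hn i); rewrite /P negb_and !negbK => /orP[/eqP->|/eqP->].
      by rewrite fN mul0r.
    by rewrite mulr0.
  have hi0l : i0 \in [seq i <- enum 'I_n | P i] by rewrite mem_filter Pi0 mem_enum.
  have [ix hix hmax] := seq_max e hi0l.
  have hPix : P ix by move: hix; rewrite mem_filter => /andP[].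
  set ns := e ix.
  have hmax' i : P i -> e i <= ns.
    by move=> hP; apply: hmax; rewrite mem_filter hP mem_enum.
  have hcS i : c i != None -> c i = Some (e i) by rewrite /e; case: (c i).
  pose d := [ffun i => if P i && (ns - KK%:Z <= e i) then Some (inord `|ns - e i|%N : 'I_KK.+1) else None].
  exists d, ns; rewrite hc mulr_sumr.
  have hkept i : P i && (ns - KK%:Z <= e i) -> Fs ns * (g (d i) * s`_i) = f (c i) * s`_i.
    move=> /andP[hP hle]; rewrite ffunE hP hle /=.
    have hle2 := hmax' i hP.
    have hab : (`|ns - e i|%N)%:Z = ns - e i by rewrite gez0_abs // subr_ge0.
    rewrite inordK; last first.
      by rewrite ltnS -(lez_nat) hab; lia.
    rewrite mulrA fSD hab (hcS i); last by case/andP: hP.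
    by rewrite opprB addrC subrK.
  apply: (sum_eq_drop (a := fun i => f (c i) * s`_i) (b := fun i => Fs ns * (g (d i) * s`_i))) => // i.
    case: (boolP (P i && (ns - KK%:Z <= e i))) => h; first by left; apply: hkept.
    by right; rewrite ffunE (negbTE h) /= mul0r mulr0.
  case: (boolP (P i && (ns - KK%:Z <= e i))) => h.
    by rewrite -hkept //; apply: (lee_term (fun j => Fs ns * (g (d j) * s`_j))).
  case: (boolP (P i)) => hP; last first.
    move: hP; rewrite /P negb_and !negbK => /orP[/eqP->|/eqP->].
      by rewrite fN mul0r; apply: lee0.
    by rewrite mulr0; apply: lee0.
  have hlt : e i + KK%:Z <= ns.
    by move: h; rewrite hP /= -ltNge; lia.
  have hkix : P ix && (ns - KK%:Z <= e ix) by rewrite hPix /=; lia.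
  have hs' : lee (Fs ns * s`_ix) (\sum_j Fs ns * (g (d j) * s`_j)).
    have -> : Fs ns * s`_ix = f (c ix) * s`_ix by rewrite (hcS ix) //; case/andP: hPix.
    by rewrite -(hkept ix hkix); apply: (lee_term (fun j => Fs ns * (g (d j) * s`_j))).
  apply: leeT hs'.
  rewrite (hcS i); last by case/andP: hP.
  apply: (@leeT _ _ (Fs (e i) * w)).
    by apply: lee_mull; apply: (lee_term (fun j : 'I_n => s`_j)).
  apply: (@leeT _ _ (Fs (e i) * (Fs KK%:Z * s`_ix))).
    by apply: lee_mull; apply: hKK; case/andP: hPix.
  by rewrite mulrA fSD; apply: lee_mul; apply: fmono.
have sunitS (k : int) : sunit (Some k : Zmax).
  by exists (Some (-k)); change (Some (k + - k) = Some 0); rewrite addrN.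
have sunit_mul (a b : Zmax) : sunit a -> sunit b -> sunit (a * b).
  by move=> [ya ha] [yb hb]; exists (ya * yb); rewrite mulrACA ha hb mulr1.
have FsN (N : int) : Fs N * Fs (- N) = 1 by rewrite fSD addrN.
apply: (sub_finite_set _ (finite_image F (@finite_finset _ setT))).
move=> C [u [hu ->]].
have [d [N ->]] := claim u (unit_nz _ hu).
exists d => //.
rewrite /F; apply/seteqP; split => x /= [k hk <-].
  exists ((Some (- N) : Zmax) * k); first exact: sunit_mul.
  rewrite fM mulrA [_ * f (Some (- N))]mulrC !mulrA -/(Fs (- N)) [Fs (- N) * _]mulrC FsN mul1r.
  done.
exists ((Some N : Zmax) * k); first exact: sunit_mul.
by rewrite fM -/(Fs N) mulrA [_ * Fs N]mulrC.
Qed.
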